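(* Let $d\ge2$, $N\ge1$, and $\beta=0$ (infinite temperature). Let $\mathbf p$ be a probability vector on $d$ levels and $\Pi$ a $d\times d$ permutation matrix, written as a product of transposition matrices $\Pi=\Pi_{i_mj_m}\Pi_{i_{m-1}j_{m-1}}\cdots\Pi_{i_1j_1}$ which is a decomposition into neighbour transpositions with respect to $\mathbf p$ (as defined in the context). Let $\mathcal P^{\Pi}=\mathcal P^{(i_mj_m)}\circ\cdots\circ\mathcal P^{(i_1j_1)}$. Then $$\mathcal P^{\Pi}(\mathbf p\otimes\boldsymbol\eta_M)=\mathbf q\otimes\boldsymbol\eta_M,\qquad \mathbf q=\big(\Pi+\epsilon\,\boldsymbol\Delta\big)\mathbf p+o\big(N^{-1/2}\big)\xrightarrow{N\to\infty}\Pi\mathbf p,$$ with $\epsilon=(\pi N)^{-1/2}$ and $$\boldsymbol\Delta=\sum_{l=1}^{m}\Big(\Pi_{i_mj_m}\cdots\Pi_{i_{l+1}j_{l+1}}\Big)\big(\mathbb 1-\Pi_{i_lj_l}\big)\Big(\Pi_{i_{l-1}j_{l-1}}\cdots\Pi_{i_1j_1}\Big)$$ (empty products being the identity).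
   Context: Setting: a $d$-level system with energies $E_1,\dots,E_d$; at $\beta=0$ its thermal distribution is uniform. An $N$-dimensional memory with trivial Hamiltonian has thermal state $\boldsymbol\eta_M=(1/N,\dots,1/N)$. Joint states are probability vectors $\mathbf Q$ of length $dN$, entry $(a-1)N+k$ corresponding to system level $a$ and memory level $k$; the joint thermal distribution $\Gamma=\boldsymbol\gamma\otimes\boldsymbol\eta_M$ is here uniform. $\Pi_{ij}$ denotes the permutation matrix transposing entries $i,j$. Two-level thermalisation $T_{xy}$: $Q_x\mapsto (Q_x+Q_y)\Gamma_x/(\Gamma_x+\Gamma_y)$, $Q_y\mapsto (Q_x+Q_y)\Gamma_y/(\Gamma_x+\Gamma_y)$, other entries unchanged. Round $\mathcal R^{(ij)}_k$ ($k=1,\dots,N$): apply sequentially, for $l=1,\dots,N$, $T_{(j-1)N+k,\,(i-1)N+l}$. $\widetilde{\mathcal P}^{(ij)}=\mathcal R^{(ij)}_N\circ\cdots\circ\mathcal R^{(ij)}_1$. Memory thermalisation $\mathcal T(\mathbf Q)=\mathbf q\otimes\boldsymbol\eta_M$, $q_a=\sum_{k}Q_{(a-1)N+k}$. $\mathcal P^{(ij)}=\mathcal T\circ\widetilde{\mathcal P}^{(ij)}$. $\beta$-order: for a distribution $\mathbf r$, its $\beta$-order is the permutation $\pi_{\mathbf r}$ arranging $(r_1/\gamma_1,\dots,r_d/\gamma_d)$ non-increasingly ($\pi_{\mathbf r}(a)$ is the position of $a$). A decomposition $\Pi=\Pi_{i_mj_m}\cdots\Pi_{i_1j_1}$ is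 into neighbour transpositions with respect to $\mathbf p$ if for each $k$ the transposition $\Pi_{i_kj_k}$ changes the $\beta$-order of $\Pi_{i_{k-1}j_{k-1}}\cdots\Pi_{i_1j_1}\mathbf p$ only by a transposition of two adjacent elements. *)

(* Defs.v *)
From HB Require Import structures.
From mathcomp Require Import all_boot all_order all_algebra all_fingroup.
From mathcomp Require Import all_classical all_reals all_analysis.
Set Implicit Arguments. Unset Strict Implicit. Unset Printing Implicit Defensive.
Import Order.TTheory GRing.Theory Num.Theory.
Local Open Scope ring_scope.

Section Defs.
Variable R : realType.

(* system distributions: column vectors 'cV_d ; joint system-memory states:
   matrices 'M_(d,N), entry (a,k) = entry (a-1)N+k of the paper *)

Definition prob_vec (d : nat) (p : 'cV[R]_d) : Prop :=
  (forall a, 0 <= p a 0) /\ \sum_a p a 0 = 1.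

Definition gamma0 (d : nat) : 'cV[R]_d := const_mx (d%:R)^-1.
Definition Gamma0 (d N : nat) : 'M[R]_(d, N) := \matrix_(a, k) (gamma0 d a 0 / N%:R).

Definition tensor_eta (d N : nat) (q : 'cV[R]_d) : 'M[R]_(d, N) :=
  \matrix_(a, k) (q a 0 / N%:R).

Definition Tlev (d N : nat) (G : 'M[R]_(d, N)) (x y : 'I_d * 'I_N)
  (Q : 'M[R]_(d, N)) : 'M[R]_(d, N) :=
  \matrix_(a, k)
    (if (a, k) == x then (Q x.1 x.2 + Q y.1 y.2) * G x.1 x.2 / (G x.1 x.2 + G y.1 y.2)
     else if (a, k) == y then (Q x.1 x.2 + Q y.1 y.2) * G y.1 y.2 / (G x.1 x.2 + G y.1 y.2)
     else Q a k).

Definition round (d N : nat) (i j : 'I_d) (k : 'I_N) (Q : 'M[R]_(d, N)) :=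
  foldl (fun Q' (l : 'I_N) => Tlev (Gamma0 d N) (j, k) (i, l) Q') Q (enum 'I_N).

Definition Ptilde (d N : nat) (i j : 'I_d) (Q : 'M[R]_(d, N)) :=
  foldl (fun Q' (k : 'I_N) => round i j k Q') Q (enum 'I_N).

Definition memtherm (d N : nat) (Q : 'M[R]_(d, N)) : 'M[R]_(d, N) :=
  tensor_eta N (\col_a (\sum_k Q a k)).

Definition Pij (d N : nat) (i j : 'I_d) (Q : 'M[R]_(d, N)) :=
  memtherm (Ptilde i j Q).

(* s = [:: (i_1,j_1); ...; (i_m,j_m)] ; P^Pi = P^{(i_m j_m)} o ... o P^{(i_1 j_1)} *)
Definition Pperm (d N : nat) (s : seq ('I_d * 'I_d)) (Q : 'M[R]_(d, N)) :=
  foldl (fun Q' t => Pij t.1 t.2 Q') Q s.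

Definition prodT (d : nat) (s : seq ('I_d * 'I_d)) : 'M[R]_d :=
  foldl (fun M t => tperm_mx t.1 t.2 *m M) 1%:M s.

Definition Delta (d : nat) (s : seq ('I_d * 'I_d)) : 'M[R]_d :=
  \sum_(l < size s)
    prodT (drop l.+1 s) *m (1%:M - tperm_mx (tnth (in_tuple s) l).1
                                             (tnth (in_tuple s) l).2)
      *m prodT (take l s).

(* pi is a beta-order of r: pi arranges (r_a / gamma_a)_a non-increasingly,
   i.e. pi a is the position of a (ties may be arranged in any order) *)
Definition beta_order (d : nat) (r : 'cV[R]_d) (sg : {perm 'I_d}) : Prop :=
  forall a b : 'I_d, (sg a < sg b)%N ->
    r b 0 / gamma0 d b 0 <= r a 0 / gamma0 d a 0.

Definition neighbour_transp (d : nat) (r : 'cV[R]_d) (i j : 'I_d) : Prop :=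
  exists sg : {perm 'I_d}, beta_order r sg /\
    ((sg i).+1 = sg j \/ (sg j).+1 = sg i).

Definition neighbour_decomposition (d : nat) (p : 'cV[R]_d)
  (s : seq ('I_d * 'I_d)) : Prop :=
  forall l : 'I_(size s),
    neighbour_transp (prodT (take l s) *m p)
      (tnth (in_tuple s) l).1 (tnth (in_tuple s) l).2.
End Defs.

Arguments prodT {R d}.
Arguments Delta {R d}.

(* Main.v *)
Require Import Defs.
From HB Require Import structures.
From mathcomp Require Import all_boot all_order all_algebra all_fingroup.
From mathcomp Require Import all_classical all_reals all_analysis.
From mathcomp Require Import ring lra zify.
Import Order.TTheory GRing.Theory Num.Theory.
Import numFieldNormedType.Exports.
Local Open Scope classical_set_scope.
Local Open Scope ring_scope.
Set Implicit Arguments. Unset Strict Implicit. Unset Printing Implicit Defensive.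
Definition Vn (k l : nat) : nat := (\sum_(l <= i < k + l) 'C(k + l - 1, i))%N.

Lemma Vn_k0 k : Vn k.+1 0 = (2 ^ k)%N.
Proof.
rewrite /Vn addn0 subn1 /= big_mkord (expnDn 1 1 k).
by apply: eq_bigr => i _; rewrite !exp1n !muln1.
Qed.

Lemma Vn_0l l : Vn 0 l = 0%N.
Proof. by rewrite /Vn add0n big_geq. Qed.

Lemma Vn_rec k l : Vn k.+1 l.+1 = (Vn k.+1 l + Vn k l.+1)%N.
Proof.
rewrite /Vn.
have -> : (k.+1 + l.+1 = (k + l).+2)%N by lia.
have -> : (k.+1 + l = (k + l).+1)%N by lia.
have -> : (k + l.+1 = (k + l).+1)%N by lia.
rewrite !subn1 /= big_add1 /=.
under eq_bigr do rewrite binS.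
rewrite big_split /= addnC; congr (_ + _)%N.
rewrite [in RHS]big_add1 /= big_nat_recr /=; last by lia.
by rewrite (@bin_small (k + l) (k + l).+1) // addn0.
Qed.

Lemma Vn_diag N : Vn N.+1 N = ('C(N.*2, N) + Vn N N.+1)%N.
Proof.
rewrite /Vn.
have -> : (N.+1 + N = N + N.+1)%N by lia.
have -> : (N + N.+1 - 1 = N.*2)%N by lia.
by rewrite big_ltn //; lia.
Qed.
Section Grid.
Variable R : realType.

Definition vg (k l : nat) : R := (Vn k l)%:R / 2 ^+ (k + l).-1.

Lemma vg_k0 k : vg k.+1 0 = 1.
Proof. by rewrite /vg Vn_k0 addn0 /= natrX divff // expf_neq0. Qed.

Lemma vg_0l l : vg 0 l = 0.
Proof. by rewrite /vg Vn_0l mul0r. Qed.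

Lemma vg_rec k l : vg k.+1 l.+1 = (vg k.+1 l + vg k l.+1) / 2.
Proof.
rewrite /vg Vn_rec natrD.
have -> : ((k.+1 + l.+1).-1 = (k + l).+1)%N by lia.
have -> : ((k.+1 + l).-1 = (k + l))%N by lia.
have -> : ((k + l.+1).-1 = (k + l))%N by lia.
rewrite exprS; field.
by rewrite expf_neq0.
Qed.

Lemma vg_sym k l : (0 < k + l)%N -> vg k l + vg l k = 1.
Proof.
move=> kl.
suff H : forall n k l, (k + l = n.+1)%N -> vg k l + vg l k = 1.
  by apply: (H (k + l).-1); lia.
elim=> [|n IH] [|k'] [|l'] H.
- by [].
- by rewrite vg_0l vg_k0 add0r.
- by rewrite vg_0l vg_k0 addr0.
- exfalso; lia.
- by [].
- by rewrite vg_0l vg_k0 add0r.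
- by rewrite vg_0l vg_k0 addr0.
- rewrite !vg_rec.
  have h1 : vg k'.+1 l' + vg l' k'.+1 = 1 by apply: IH; lia.
  have h2 : vg k' l'.+1 + vg l'.+1 k' = 1 by apply: IH; lia.
  lra.
Qed.
End Grid.
Section Grid2.
Variable R : realType.
Local Notation vg := (@vg R).

Definition cN (N : nat) : R := 'C(N.*2, N)%:R / 2 ^+ N.*2.

Lemma vg_diag N : vg N.+1 N - vg N N.+1 = cN N.
Proof.
rewrite /vg /cN Vn_diag natrD.
have -> : ((N.+1 + N).-1 = N.*2)%N by lia.
have -> : ((N + N.+1).-1 = N.*2)%N by lia.
field; by rewrite expf_neq0.
Qed.

Lemma bin_rec N : ('C(N.+1.*2, N.+1) * N.+1 = 2 * N.*2.+1 * 'C(N.*2, N))%N.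
Proof.
have h1 := mul_bin_diag (N.*2.+2) N.
have h2 := mul_bin_down (N.*2.+1) N.
have e : (N.*2.+1 - N = N.+1)%N by lia.
rewrite e /= in h1 h2.
have -> : (N.+1.*2 = N.*2.+2)%N by lia.
rewrite mulnC -h1 (_ : N.*2.+2 = 2 * N.+1)%N; last by lia.
by rewrite -mulnA -h2 mulnA.
Qed.

Lemma cN_rec N : cN N.+1 * (N.+1%:R *+ 2) = cN N * (N.*2.+1)%:R.
Proof.
rewrite /cN.
have h := bin_rec N.
have h' : ('C(N.+1.*2, N.+1))%:R * (N.+1)%:R = 2 * (N.*2.+1)%:R * ('C(N.*2, N))%:R :> R.
  by rewrite -!natrM h.
have -> : (N.+1.*2 = (N.*2).+2)%N by lia.
rewrite !exprS.
have -> : ('C(N.*2.+2, N.+1) = 'C(N.+1.*2, N.+1))%N by congr binomial; lia.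
rewrite mulrnAr -mulr_natr.
have e2 : (2 ^+ N.*2 : R) != 0 by rewrite expf_neq0.
move: h' e2; set X := (2 ^+ N.*2 : R); set a := ('C(_, _))%:R; set b := ('C(N.*2, N))%:R.
move=> h' e2.
have -> : a / (2 * (2 * X)) * N.+1%:R * 2 = (a * N.+1%:R) / (2 * X) by field.
rewrite h'; field. all: by [].
Qed.

Definition Rs (K l : nat) : R := \sum_(k < K) vg k.+1 l.

Lemma Rs_rec K l : Rs K l.+1 = Rs K l - vg K l.+1.
Proof.
have e : \sum_(k < K) vg k l.+1 + vg K l.+1 = Rs K l.+1.
  by rewrite -(big_ord_recr K (fun k => vg k l.+1)) big_ord_recl /= vg_0l add0r.
have e2 : Rs K l.+1 * 2 = Rs K l + \sum_(k < K) vg k l.+1.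
  rewrite /Rs big_distrl -big_split /=; apply: eq_bigr => k _.
  by rewrite vg_rec; field.
lra.
Qed.

Lemma Sg_eq N : Rs N N = N%:R * cN N.
Proof.
elim: N => [|N IH]; first by rewrite /Rs big_ord0 mul0r.
have e1 : Rs N.+1 N.+1 = Rs N N.+1 + vg N.+1 N.+1 by rewrite /Rs big_ord_recr.
have e2 := Rs_rec N N.
have e3 := @vg_rec R N N.
have e4 := vg_diag N.
have e5 := cN_rec N.
have f1 : (N.+1)%:R = N%:R + 1 :> R by rewrite -addn1 natrD.
have f2 : (N.*2.+1)%:R = 2 * N%:R + 1 :> R by rewrite -addn1 natrD -mul2n natrM.
rewrite mulr2n f1 f2 in e5.
rewrite f1 e1 e2 IH e3.
lra.
Qed.
End Grid2.
Lemma foldl_ord (T : Type) n (f : T -> 'I_n -> T) (M : nat -> T) :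
  (forall l : 'I_n, f (M l) l = M l.+1) -> foldl f (M 0%N) (enum 'I_n) = M n.
Proof.
move=> H.
suff G : forall s m, map val s = iota m (size s) -> foldl f (M m) s = M (m + size s)%N.
  by rewrite G ?size_enum_ord ?val_enum_ord.
elim => [|x s IH] m /=; first by rewrite addn0.
move=> [hx hs]; subst m.
by rewrite H IH // addSnnS.
Qed.

Definition Lt (R : realType) d (al : R) (i j : 'I_d) : 'M[R]_d :=
  tperm_mx i j + al *: (1%:M - tperm_mx i j).

Lemma Lt_mul (R : realType) d (al : R) (i j : 'I_d) (p : 'cV[R]_d) a :
  (Lt al i j *m p) a 0 = p (tperm i j a) 0 + al * (p a 0 - p (tperm i j a) 0).
Proof.
rewrite /Lt mulmxDl -scalemxAl mulmxBl mul1mx -row_permE !mxE.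
by [].
Qed.


Section Process.
Variables (R : realType) (d N : nat) (i j : 'I_d) (p : 'cV[R]_d).
Hypotheses (d0 : (0 < d)%N) (N0 : (0 < N)%N) (ij : i != j).

Let A : R := p i 0 / N%:R.
Let B : R := p j 0 / N%:R.
Definition cg (k l : nat) : R := A + (B - A) * vg R k l.

Definition Mk (k l : nat) : 'M[R]_(d, N) := \matrix_(a, m)
  if a == j then (if (m < k)%N then cg m.+1 N else if (m == k :> nat) then cg k.+1 l else B)
  else if a == i then (if (m < l)%N then cg k.+1 m.+1 else cg k m.+1)
  else tensor_eta N p a m.

Lemma cg_k0 k : cg k.+1 0 = B.
Proof. by rewrite /cg vg_k0 mulr1 addrC subrK. Qed.
Lemma cg_0l l : cg 0 l = A.
Proof. by rewrite /cg vg_0l mulr0 addr0. Qed.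
Lemma cg_rec k l : cg k.+1 l.+1 = (cg k.+1 l + cg k l.+1) / 2.
Proof. rewrite /cg vg_rec; field. all: by []. Qed.

Lemma Mk_step (k l : 'I_N) :
  Tlev (Gamma0 R d N) (j, k) (i, l) (Mk k l) = Mk k l.+1.
Proof.
have gE : forall S : R, S * ((d%:R)^-1 / N%:R) / ((d%:R)^-1 / N%:R + (d%:R)^-1 / N%:R) = S / 2.
  move=> S; field.
  by rewrite pnatr_eq0 -lt0n N0 pnatr_eq0 -lt0n d0.
have ji : j != i by rewrite eq_sym.
apply/matrixP => a m; rewrite !mxE /= !gE !eqxx /= (negbTE ij) !ltnn -cg_rec !xpair_eqE.
have -> : (m == k) = (m == k :> nat) by [].
have -> : (m == l) = (m == l :> nat) by [].
case: (eqVneq a j) => [->|aj] /=.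
  rewrite (negbTE ji) /=.
  case: (ltngtP m k) => mk /=.
  - by [].
  - by [].
  - by [].
case: (eqVneq a i) => [_|ai] /=; last by [].
case: (ltngtP m l) => ml /=.
- by rewrite ltnS ltnW.
- by rewrite ltnS leqNgt ml.
- by rewrite ml ltnSn.
Qed.

Lemma round_Mk (k : 'I_N) : round i j k (Mk k 0) = Mk k N.
Proof. by rewrite /round; apply: (foldl_ord (M := Mk k)) => l; exact: Mk_step. Qed.

Lemma Mk_next k : Mk k N = Mk k.+1 0.
Proof.
apply/matrixP => a m; rewrite !mxE.
case: (a == j).
  case: (ltngtP m k) => mk.
  - by rewrite ltnS ltnW.
  - by rewrite ltnS leqNgt mk /=; case: ifP => _; rewrite ?cg_k0.
  - by rewrite mk ltnSn.
by rewrite ltn_ord.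
Qed.

Lemma Mk00 : Mk 0 0 = tensor_eta N p.
Proof.
apply/matrixP => a m; rewrite !mxE.
case: (eqVneq a j) => [->|aj].
  by case: (m == 0%N :> nat); rewrite ?cg_k0.
by case: (eqVneq a i) => [->|ai]; rewrite ?cg_0l.
Qed.

Lemma Ptilde_Mk : Ptilde i j (tensor_eta N p) = Mk N 0.
Proof.
rewrite -Mk00 /Ptilde; apply: (foldl_ord (M := fun k => Mk k 0)) => k.
by rewrite round_Mk Mk_next.
Qed.

Lemma Pij_eq : Pij i j (tensor_eta N p) = tensor_eta N (Lt (cN R N) i j *m p).
Proof.
rewrite /Pij Ptilde_Mk /memtherm; congr tensor_eta; apply/matrixP => a z.
rewrite (ord1 z) Lt_mul mxE.
under eq_bigr do rewrite mxE.
have Nn0 : (N%:R : R) != 0 by rewrite pnatr_eq0 -lt0n N0.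
have sA : \sum_(m < N) A = p i 0 by rewrite sumr_const card_ord -mulr_natr /A; field.
have ji : j != i by rewrite eq_sym.
case: (eqVneq a j) => [->|aj].
  rewrite tpermR.
  under eq_bigr do rewrite ltn_ord /cg.
  rewrite big_split /= sA -big_distrr /= -/(Rs R N N) Sg_eq /B /A; by field.
case: (eqVneq a i) => [->|ai].
  rewrite tpermL.
  rewrite (eq_bigr (fun m : 'I_N => A + (B - A) * (1 - vg R m.+1 N))); last first.
    move=> m _; rewrite /cg /=; congr (_ + _ * _).
    have h : vg R m.+1 N + vg R N m.+1 = 1 by apply: vg_sym.
    lra.
  rewrite big_split /= sA -big_distrr /= big_split /= sumrN.
  rewrite -/(Rs R N N) Sg_eq sumr_const card_ord /B /A -mulr_natr; by field.
rewrite tpermD 1?eq_sym // subrr mulr0 addr0.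
under eq_bigr do rewrite mxE.
by rewrite sumr_const card_ord -mulr_natr; field.
Qed.
End Process.


Section Alg.
Variables (R : realType) (d : nat).
Implicit Types (s : seq ('I_d * 'I_d)) (al : R).

Definition prodL al s : 'M[R]_d := foldl (fun M t => Lt al t.1 t.2 *m M) 1%:M s.

Lemma foldl_mulmx (f : 'I_d * 'I_d -> 'M[R]_d) (X Y : 'M[R]_d) s :
  foldl (fun M t => f t *m M) (X *m Y) s = foldl (fun M t => f t *m M) X s *m Y.
Proof. by elim: s X => //= t s IH X; rewrite mulmxA IH. Qed.

Lemma prodL_cons al t s : prodL al (t :: s) = prodL al s *m Lt al t.1 t.2.
Proof. by rewrite /prodL /= -foldl_mulmx mul1mx mulmx1. Qed.

Lemma prodT_cons t s : prodT (t :: s) = prodT s *m tperm_mx t.1 t.2 :> 'M[R]_d.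
Proof. by rewrite /prodT /= -foldl_mulmx mul1mx mulmx1. Qed.

Lemma prodL_nil al : prodL al [::] = 1%:M.
Proof. by []. Qed.
Lemma prodT_nil : prodT [::] = 1%:M :> 'M[R]_d.
Proof. by []. Qed.

Lemma Delta_nil : Delta [::] = 0 :> 'M[R]_d.
Proof. by rewrite /Delta big_ord0. Qed.

Lemma Delta_cons t s : Delta (t :: s) =
  prodT s *m (1%:M - tperm_mx t.1 t.2) + Delta s *m tperm_mx t.1 t.2 :> 'M[R]_d.
Proof.
rewrite /Delta big_ord_recl; congr (_ + _).
  by rewrite /= drop0 (tnth_nth t) /= prodT_nil mulmx1.
rewrite mulmx_suml; apply: eq_bigr => l _.
rewrite /bump /= add0n !(tnth_nth t) /= prodT_cons !mulmxA.
by [].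
Qed.

Lemma Pperm_eq N s (p : 'cV[R]_d) : (0 < d)%N -> (0 < N)%N ->
  all (fun t => t.1 != t.2) s ->
  Pperm s (tensor_eta N p) = tensor_eta N (prodL (cN R N) s *m p).
Proof.
move=> d0 N0; elim: s p => [|t s IH] p /=; first by rewrite mul1mx.
move=> /andP[tt hs].
rewrite /Pperm /= -/(Pperm _ _) Pij_eq // IH // prodL_cons mulmxA.
by [].
Qed.
End Alg.
Section Wallis.
Variable R : realType.

Fixpoint Gw (n : nat) : R -> R :=
  match n with
  | 0 => id
  | 1 => @sin R
  | m.+2 => (m.+2%:R^-1) \*: ((@cos R) ^+ m.+1 * (@sin R)) + (m.+1%:R / m.+2%:R) \*: Gw m
  end.

Lemma Gw_der n (x : R) : is_derive x 1 (Gw n) (cos x ^+ n).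
Proof.
suff H : forall n, (forall x : R, is_derive x 1 (Gw n) (cos x ^+ n)) /\
                   (forall x : R, is_derive x 1 (Gw n.+1) (cos x ^+ n.+1)) by case: (H n).
elim=> [|m [IH1 IH2]].
  split=> y; first by rewrite expr0; exact: is_derive_id.
  by rewrite expr1; exact: is_derive_sin.
split=> // y.
have h := is_deriveD (is_deriveZ (m.+2%:R^-1) (is_deriveM (is_deriveX m.+1 (is_derive_cos y)) (is_derive_sin y))) (is_deriveZ (m.+1%:R / m.+2%:R) (IH1 y)).
apply: (is_derive_eq h).
have sE : forall a b : R, a *: b = a * b by [].
have cE : (@cos R ^+ m.+1) y = cos y ^+ m.+1 by rewrite exprfctE.
rewrite !sE cE /=.
have n0 : (m.+2%:R : R) != 0 by rewrite pnatr_eq0.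
rewrite (exprSr _ m.+1) exprSr.
have -> : sin y * (m.+1%:R * cos y ^+ m * - sin y) = - (m.+1%:R * cos y ^+ m) * (sin y ^+ 2) by ring.
rewrite sin2cos2 -[m.+2]addn2 -[m.+1]addn1 !natrD.
have n0' : (m%:R + 2 : R) != 0 by rewrite -natrD pnatr_eq0 addn2.
field.
by [].
Qed.

Definition W n : R := Gw n (pi / 2) - Gw n 0.

Lemma W0 : W 0 = pi / 2.
Proof. by rewrite /W /= subr0. Qed.

Lemma W1 : W 1 = 1.
Proof. by rewrite /W /= sin_pihalf sin0 subr0. Qed.

Lemma W_rec m : W m.+2 = m.+1%:R / m.+2%:R * W m.
Proof.
have E : forall z, Gw m.+2 z = m.+2%:R^-1 * (cos z ^+ m.+1 * sin z) + (m.+1%:R/m.+2%:R) * Gw m z.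
  by move=> z; rewrite /= exprfctE.
rewrite /W !E cos_pihalf sin0 expr0n /= !mul0r !mulr0 !add0r.
by rewrite mulrBr.
Qed.


Lemma W_mono n : W n.+1 <= W n.
Proof.
pose H := Gw n - Gw n.+1.
have dH : forall x : R, is_derive x 1 H (cos x ^+ n - cos x ^+ n.+1).
  by move=> x; apply: is_deriveB; apply: Gw_der.
have cH : {within `[0, pi / 2], continuous H}.
  apply: continuous_subspaceT => x.
  apply: differentiable_continuous; apply/derivable1_diffP.
  by have := dH x => /(@ex_derive _ _ _ _ _ _ _).
have p0 : (0 : R) < pi / 2 by rewrite divr_gt0 // pi_gt0.
have [c c0 Hc] := MVT p0 (fun x _ => dH x) cH.
have : 0 <= H (pi / 2) - H 0.
  rewrite Hc subr0; apply: mulr_ge0; last exact: ltW.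
  rewrite exprS -{1}[cos c ^+ n]mul1r -mulrBl; apply: mulr_ge0.
    by rewrite subr_ge0 cos_le1.
  apply: exprn_ge0; apply: cos_ge0_pihalf.
  move: c0; rewrite in_itv /= => /andP[h1 h2].
  by apply/andP; split; apply: ltW => //; apply: lt_trans h1; rewrite oppr_lt0.
have HE : forall z, H z = Gw n z - Gw n.+1 z by [].
rewrite !HE /W => h; lra.
Qed.

Lemma cN_gt0 N : 0 < cN R N.
Proof. by rewrite /cN divr_gt0 ?exprn_gt0 // ltr0n bin_gt0 -addnn leq_addr. Qed.

Lemma cN_next N : cN R N.+1 = cN R N * (2 * N%:R + 1) / (2 * N%:R + 2).
Proof.
have h := cN_rec R N.
have f1 : (N.+1)%:R *+ 2 = 2 * N%:R + 2 :> R by rewrite -addn1 natrD mulr2n; ring.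
have f2 : (N.*2.+1)%:R = 2 * N%:R + 1 :> R by rewrite -addn1 natrD -mul2n natrM.
rewrite f1 f2 in h.
have n0 : 2 * N%:R + 2 != 0 :> R by rewrite -[2]/(2%:R) -natrM -natrD pnatr_eq0 addn2.
by rewrite -h; field.
Qed.

Lemma W_cN N : W (N.*2) = pi / 2 * cN R N /\ W (N.*2.+1) * ((2 * N%:R + 1) * cN R N) = 1.
Proof.
elim: N => [|N [IH1 IH2]].
  by rewrite W0 W1 /cN /= bin0 expr0 divr1 mulr0 add0r !mulr1.
have e1 : N.+1.*2 = (N.*2).+2 by lia.
have f1 : (N.*2).+1%:R = 2 * N%:R + 1 :> R by rewrite -addn1 natrD -mul2n natrM.
have f2 : (N.*2).+2%:R = 2 * N%:R + 2 :> R by rewrite -addn2 natrD -mul2n natrM.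
have f3 : (N.*2).+3%:R = 2 * N%:R + 3 :> R by rewrite -addn3 natrD -mul2n natrM.
have f4 : N.+1%:R = N%:R + 1 :> R by rewrite -addn1 natrD.
have n2 : 2 * N%:R + 2 != 0 :> R by rewrite -f2 pnatr_eq0.
have n3 : 2 * N%:R + 3 != 0 :> R by rewrite -f3 pnatr_eq0.
rewrite e1 W_rec f1 f2 IH1 (W_rec N.*2.+1) f2 f3 cN_next f4.
split; first by field.
apply: etrans _ IH2; field; by rewrite n2 n3.
Qed.

Lemma wallis N : (0 < N)%N ->
  1 - (2 * N%:R + 1)^-1 <= pi * N%:R * cN R N ^+ 2 <= 1.
Proof.
move=> N0.
have [IH1 IH2] := W_cN N.
have [_ IH3] := W_cN N.+1.
have m1 := W_mono N.*2.
have m2 := W_mono N.*2.+1.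
have e1 : N.+1.*2 = (N.*2).+2 by lia.
rewrite IH1 in m1.
rewrite -e1 (proj1 (W_cN N.+1)) cN_next in m2.
set c := cN R N in IH1 IH2 m1 m2 *.
set w := W N.*2.+1 in IH2 m1 m2 *.
set n := (N%:R : R) in IH2 m1 m2 *.
have n1 : 1 <= n by rewrite /n ler1n.
have c0 : 0 < c by apply: cN_gt0.
have pi0 : 0 < pi :> R by apply: pi_gt0.
have t0 : 0 < 2 * n + 1 by lra.
have t2 : 0 < 2 * n + 2 by lra.
have L1 : 1 <= pi / 2 * c * ((2 * n + 1) * c).
  rewrite -[X in X <= _]IH2; apply: ler_wpM2r => //; apply: mulr_ge0; lra.
have L2 : pi / 2 * (c * (2 * n + 1) / (2 * n + 2)) * ((2 * n + 1) * c) <= 1.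
  rewrite -[X in _ <= X]IH2; apply: ler_wpM2r => //; apply: mulr_ge0; lra.
set y := pi * c ^+ 2.
have Ly : 2 <= y * (2 * n + 1).
  rewrite /y; move: L1; rewrite expr2.
  have -> : pi / 2 * c * ((2 * n + 1) * c) = pi * (c * c) * (2 * n + 1) / 2 by field.
  by rewrite ler_pdivlMr // mul1r.
have Uy : y * (2 * n + 1) ^+ 2 <= 2 * (2 * n + 2).
  rewrite /y; move: L2; rewrite !expr2.
  have -> : pi / 2 * (c * (2 * n + 1) / (2 * n + 2)) * ((2 * n + 1) * c) =
    pi * (c * c) * ((2 * n + 1) * (2 * n + 1)) / (2 * (2 * n + 2)) by field; lra.
  rewrite ler_pdivrMr ?mul1r //; lra.
have -> : pi * n * c ^+ 2 = y * n by rewrite /y; ring.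
apply/andP; split.
  have -> : 1 - (2 * n + 1)^-1 = (2 * n) / (2 * n + 1) by field; lra.
  rewrite ler_pdivrMr //.
  nra.
have h : y * n * (2 * n + 1) ^+ 2 <= 1 * (2 * n + 1) ^+ 2.
  have : y * n * (2 * n + 1) ^+ 2 <= 2 * (2 * n + 2) * n.
    by rewrite mulrAC; apply: ler_wpM2r => //; lra.
  move=> h1; apply: (le_trans h1); rewrite mul1r expr2; nra.
by rewrite ler_pM2r ?exprn_gt0 in h.
Qed.
End Wallis.
Section Limits.
Variable R : realType.

Lemma sq_cvg0 (f : nat -> R) :
  (forall N, (0 < N)%N -> 0 <= f N /\ f N ^+ 2 <= N%:R^-1) -> f @ \oo --> 0.
Proof.
move=> H.
have hs : (fun N => Num.sqrt (2 * harmonic N)) @ \oo --> (0:R).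
  rewrite -sqrtr0 -[X in Num.sqrt X](mulr0 (2 : R)).
  apply: (continuous_cvg _ (@sqrt_continuous R _)).
  apply: cvgM; [exact: cvg_cst | exact: cvg_harmonic].
apply: (squeeze_cvgr _ (cvg_cst 0) hs).
near=> N.
have N1 : (0 < N)%N by near: N; apply: nbhs_infty_ge.
have [f0 f2] := H N N1.
apply/andP; split => //.
rewrite -(ger0_norm f0) -sqrtr_sqr ler_sqrt; last by apply: mulr_ge0 => //=; rewrite invr_ge0 ler0n.
apply: (le_trans f2) => /=.
have n0 : (0 : R) < N%:R by rewrite ltr0n.
have -> : (N.+1%:R : R) = N%:R + 1 by rewrite -addn1 natrD.
rewrite -subr_ge0.
have -> : (1 + 1) / (N%:R + 1) - N%:R^-1 = (N%:R - 1) / (N%:R * (N%:R + 1)) :> R.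
  by field; rewrite gt_eqF //; lra.
have : (1 : R) <= N%:R by rewrite ler1n.
move=> h1; apply: divr_ge0; nra.
Unshelve. all: by end_near.
Qed.

Lemma cvg_mulmx m n k (A : nat -> 'M[R]_(m, n)) (B : nat -> 'M[R]_(n, k)) (A0 : 'M[R]_(m, n)) (B0 : 'M[R]_(n, k)) :
  (forall a b, (fun N => A N a b) @ \oo --> A0 a b) ->
  (forall a b, (fun N => B N a b) @ \oo --> B0 a b) ->
  forall a b, (fun N => (A N *m B N) a b) @ \oo --> (A0 *m B0) a b.
Proof.
move=> hA hB a b; rewrite mxE.
under eq_cvg do rewrite mxE.
apply: cvg_big; first exact: add_continuous.
by move=> c _; apply: cvgM.
Qed.
End Limits.
Section Main.
Variables (R : realType) (d : nat).
Implicit Types (s : seq ('I_d * 'I_d)) (al : R).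

Definition Em al s : 'M[R]_d := prodL al s - prodT s - al *: Delta s.

Lemma Em_nil al : Em al [::] = 0.
Proof. by rewrite /Em prodL_nil prodT_nil Delta_nil scaler0 !subrr. Qed.

Lemma Em_cons al t s : Em al (t :: s) =
  Em al s *m Lt al t.1 t.2 + (al ^+ 2) *: (Delta s *m (1%:M - tperm_mx t.1 t.2)).
Proof.
rewrite /Em prodL_cons prodT_cons Delta_cons /Lt.
set Pt := tperm_mx t.1 t.2.
set U := (1%:M - Pt).
set L := prodL al s; set P := prodT s; set D := Delta s.
clearbody U Pt L P D.
rewrite !mulmxDr !mulmxBl -!scalemxAr -!scalemxAl.
move: (L *m Pt) (L *m U) (P *m Pt) (P *m U) (D *m Pt) (D *m U) => x1 x2 x3 x4 x5 x6.
apply/matrixP => a b; rewrite !mxE; ring.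
Qed.

Lemma pi_ge1 : (1 : R) <= pi.
Proof. by apply: le_trans (pi_ge2 _); rewrite ler1n. Qed.

Lemma cN_sq N : (0 < N)%N -> N%:R * cN R N ^+ 2 <= 1.
Proof.
move=> N0; have /andP[_ h] := wallis R N0.
apply: le_trans h; rewrite -mulrA ler_peMl //; last exact: pi_ge1.
by apply: mulr_ge0; rewrite ?ler0n ?sqr_ge0.
Qed.

Lemma cN_sq' N : (0 < N)%N -> cN R N ^+ 2 <= N%:R^-1.
Proof.
move=> N0; have n0 : (0 : R) < N%:R by rewrite ltr0n.
by rewrite -(ler_pM2l n0) mulfV ?gt_eqF // cN_sq.
Qed.

Lemma al_cvg0 : (fun N => cN R N) @ \oo --> 0.
Proof.
apply: sq_cvg0 => N N0; split; first exact/ltW/cN_gt0.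
exact: cN_sq'.
Qed.

Lemma sa2_cvg0 : (fun N => Num.sqrt N%:R * cN R N ^+ 2) @ \oo --> 0.
Proof.
apply: sq_cvg0 => N N0; split.
  by apply: mulr_ge0; rewrite ?sqrtr_ge0 ?sqr_ge0.
rewrite exprMn sqr_sqrtr ?ler0n // -exprM.
have -> : N%:R * cN R N ^+ (2 * 2) = (N%:R * cN R N ^+ 2) * cN R N ^+ 2.
  by rewrite exprM expr2 mulrA.
apply: le_trans (cN_sq' N0).
rewrite ler_piMl ?sqr_ge0 //; exact: cN_sq.
Qed.

Lemma se_cvg0 :
  (fun N => Num.sqrt N%:R * (cN R N - (Num.sqrt (pi * N%:R))^-1)) @ \oo --> 0.
Proof.
have hN : (fun N => - harmonic N) @ \oo --> (0 : R).
  by rewrite -oppr0; apply: cvgN; exact: cvg_harmonic.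
apply: (squeeze_cvgr _ hN (@cvg_harmonic R)).
near=> N.
have N0 : (0 < N)%N by near: N; apply: nbhs_infty_ge.
rewrite -ler_norml.
have pi0 : (0 : R) < pi by apply: pi_gt0.
have n0 : (0 : R) < N%:R by rewrite ltr0n.
have sp0 : 0 < Num.sqrt (pi : R) by rewrite sqrtr_gt0.
have sn0 : 0 < Num.sqrt (N%:R : R) by rewrite sqrtr_gt0.
have sp1 : 1 <= Num.sqrt (pi : R) by rewrite -sqrtr1 ler_sqrt ?pi_ge1 //; lra.
have c0 := cN_gt0 R N.
have /andP[w1 w2] := wallis R N0.
rewrite sqrtrM; last exact: ltW.
set sp := Num.sqrt pi in sp0 sp1 *; set sn := Num.sqrt N%:R in sn0 *.
set c := cN R N in c0 w1 w2 *.
have y2 : (sp * sn * c) ^+ 2 = pi * N%:R * c ^+ 2.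
  by rewrite !exprMn /sp /sn !sqr_sqrtr ?ler0n // ?(ltW pi0).
rewrite -y2 in w1 w2.
set y := sp * sn * c in y2 w1 w2.
have y0 : 0 <= y by rewrite /y !mulr_ge0 // ltW.
have -> : sn * (c - (sp * sn)^-1) = (y - 1) / sp by rewrite /y; field; rewrite !gt_eqF.
set t := (2 * N%:R + 1)^-1 in w1.
have y1 : y <= 1 by nra.
have yl : 1 - t <= y by nra.
have ht : t <= harmonic N.
  rewrite /t /= lef_pV2 ?posrE.
  all: try (rewrite -addn1 natrD; lra).
  all: try lra.
rewrite normrM normfV (gtr0_norm sp0).
apply: (@le_trans _ _ (`|y - 1|)).
  by rewrite ler_pdivrMr // ler_peMr.
apply: le_trans ht.
by rewrite ler0_norm; lra.
Unshelve. all: by end_near.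
Qed.

Lemma Lt_cvg (i j : 'I_d) a b :
  (fun N => Lt (cN R N) i j a b) @ \oo --> (tperm_mx i j : 'M[R]_d) a b.
Proof.
have E : forall N, Lt (cN R N) i j a b =
    (tperm_mx i j : 'M[R]_d) a b + cN R N * (1%:M - tperm_mx i j : 'M[R]_d) a b.
  by move=> N; rewrite /Lt mxE [X in _ + X = _]mxE.
under eq_cvg do rewrite E.
have h := cvgD (cvg_cst (F := \oo) ((tperm_mx i j : 'M[R]_d) a b))
  (cvgMr_tmp (b := (1%:M - tperm_mx i j : 'M[R]_d) a b) al_cvg0).
rewrite mul0r addr0 in h; exact: h.
Qed.

Lemma L1 s a b : (fun N => prodL (cN R N) s a b) @ \oo --> prodT s a b.
Proof.
elim: s a b => [|t s IH] a b; first by rewrite prodT_nil; apply: cvg_cst.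
under eq_cvg do rewrite prodL_cons.
rewrite prodT_cons; apply: cvg_mulmx => // a' b'; exact: Lt_cvg.
Qed.

Lemma L2 s a b : (fun N => (Num.sqrt N%:R *: Em (cN R N) s) a b) @ \oo --> 0.
Proof.
elim: s a b => [|t s IH] a b.
  under eq_cvg do rewrite Em_nil scaler0 mxE.
  exact: cvg_cst.
have E : forall N, (Num.sqrt N%:R *: Em (cN R N) (t :: s)) a b =
   ((Num.sqrt N%:R *: Em (cN R N) s) *m Lt (cN R N) t.1 t.2) a b +
   (Num.sqrt N%:R * cN R N ^+ 2) * (Delta s *m (1%:M - tperm_mx t.1 t.2)) a b.
  move=> N; rewrite Em_cons scalerDr scalerA mxE [X in _ + X = _]mxE.
  by rewrite (scalemxAl (Num.sqrt N%:R)).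
have FE : (fun N => (Num.sqrt N%:R *: Em (cN R N) (t :: s)) a b) =
   (fun N => ((Num.sqrt N%:R *: Em (cN R N) s) *m Lt (cN R N) t.1 t.2) a b +
   (Num.sqrt N%:R * cN R N ^+ 2) * (Delta s *m (1%:M - tperm_mx t.1 t.2)) a b).
  by apply/funext => N; exact: E.
rewrite FE.
have IH' : forall a b, (fun N => (Num.sqrt N%:R *: Em (cN R N) s) a b) @ \oo --> (0 : 'M[R]_d) a b.
  by move=> a' b'; rewrite mxE; exact: IH.
have h1 := cvg_mulmx (a := a) (b := b) IH' (fun a' b' => @Lt_cvg t.1 t.2 a' b').
set K := (Delta s *m (1%:M - tperm_mx t.1 t.2)) a b.
have h2 : (fun N => (Num.sqrt N%:R * cN R N ^+ 2) * K) @ \oo --> 0 * K.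
  by apply: cvgMr_tmp; exact: sa2_cvg0.
have h := cvgD h1 h2.
have e0 : (0 *m (tperm_mx t.1 t.2 : 'M[R]_d)) a b + 0 * K = 0 by rewrite mul0mx mxE mul0r addr0.
rewrite e0 in h; exact: h.
Qed.
End Main.
Unset Implicit Arguments.

Theorem theorem1 (R : realType) (d : nat) (p : 'cV[R]_d)
  (s : seq ('I_d * 'I_d)) :
  (2 <= d)%N -> prob_vec p -> neighbour_decomposition p s ->
  exists q : nat -> 'cV[R]_d,
    (forall N : nat, (1 <= N)%N ->
       Pperm s (tensor_eta N p) = tensor_eta N (q N)) /\
    (forall a : 'I_d,
       (fun N : nat => Num.sqrt (N%:R) *
          (q N a 0 - ((prodT s + (Num.sqrt (pi * N%:R))^-1 *: Delta s) *m p) a 0))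
       @ \oo --> (0 : R)) /\
    (forall a : 'I_d, (fun N : nat => q N a 0) @ \oo --> (prodT s *m p) a 0).
Proof.
move=> d2 _ nd.
have d0 : (0 < d)%N by apply: leq_trans d2.
have hs : all (fun t => t.1 != t.2) s.
  apply/allP => t ts.
  have il : (index t s < size s)%N by rewrite index_mem.
  have := nd (Ordinal il); rewrite (tnth_nth t) /= nth_index //.
  case=> sg [_ [h|h]]; apply/eqP => e; rewrite e in h; lia.
exists (fun N => prodL (cN R N) s *m p).
split; first by move=> N N1; apply: Pperm_eq.
have cstp : forall a b, (fun _ : nat => p a b) @ \oo --> p a b by move=> a b; exact: cvg_cst.
split.
  move=> a.
  have FE : (fun N => Num.sqrt (N%:R) *
          ((prodL (cN R N) s *m p) a 0 - ((prodT s + (Num.sqrt (pi * N%:R))^-1 *: Delta s) *m p) a 0)) =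
     (fun N => ((Num.sqrt N%:R *: Em (cN R N) s) *m p) a 0 +
       (Num.sqrt N%:R * (cN R N - (Num.sqrt (pi * N%:R))^-1)) * (Delta s *m p) a 0).
    apply/funext => N; rewrite /Em.
    rewrite mulmxDl -!scalemxAl !mulmxBl -scalemxAl.
    move: (prodL (cN R N) s *m p) (prodT s *m p) (Delta s *m p) => u v w.
    rewrite !mxE; ring.
  rewrite FE.
  have IH' : forall a b, (fun N => (Num.sqrt N%:R *: Em (cN R N) s) a b) @ \oo --> (0 : 'M[R]_d) a b.
    by move=> a' b'; rewrite mxE; exact: L2.
  have h1 := cvg_mulmx (a := a) (b := 0) IH' cstp.
  set K := (Delta s *m p) a 0.
  have h2 : (fun N => (Num.sqrt N%:R * (cN R N - (Num.sqrt (pi * N%:R))^-1)) * K) @ \oo --> 0 * K.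
    by apply: cvgMr_tmp; exact: se_cvg0.
  have h := cvgD h1 h2.
  have e0 : (0 *m p) a 0 + 0 * K = 0 by rewrite mul0mx mxE mul0r addr0.
  rewrite e0 in h; exact: h.
move=> a.
exact: (cvg_mulmx (a := a) (b := 0) (@L1 R d s) cstp).
Qed.
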